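(* For linear codes $\mathcal{C}_1,\dots,\mathcal{C}_D\subseteq\mathbb{F}_q^n$ and the zero code $\mathbf{0}\subseteq\mathbb{F}_q^n$ we have $\rho(\mathbf{0},\mathcal{C}_1,\dots,\mathcal{C}_D)=\rho(\mathcal{C}_1,\dots,\mathcal{C}_D)$.
   Context: $\mathbb{F}_q$ is a finite field of characteristic 2. For a finite set $S$, $|v|$ is the Hamming weight of $v\in\mathbb{F}_q^S$ and $\|v\|=|v|/|S|$. For linear codes $\mathcal{A}_1,\dots,\mathcal{A}_E\subseteq\mathbb{F}_q^n$: $\mathcal{L}_i$ is the set of lines in $[n]^E$ parallel to the $i$-th axis; $\mathcal{A}^{(i)}=\{c\in\mathbb{F}_q^{[n]^E}:c|_\ell\in\mathcal{A}_i\ \forall\ell\in\mathcal{L}_i\}$; $\mathcal{A}_1\boxplus\cdots\boxplus\mathcal{A}_E=\sum_i\mathcal{A}^{(i)}$; $|x|_i$ is the number of $\ell\in\mathcal{L}_i$ with $x|_\ell\ne0$ and $\|x\|_i=|x|_i/n^{E-1}$. The collection is $\rho$-product-expanding if every $c\in\mathcal{A}_1\boxplus\cdots\boxplus\mathcal{A}_E$ can be written $c=\sum_ia_i$, $a_i\in\mathcal{A}^{(i)}$, with $\rho\sum_i\|a_i\|_i\le\|c\|$; $\rho(\mathcal{A}_1,\dots,\mathcal{A}_E)$ is the maximal such $\rho$. *)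

(* Defs.v *)
From HB Require Import structures.
From mathcomp Require Import all_boot all_order all_algebra all_field.
From mathcomp Require Import all_classical all_reals all_analysis.
Set Implicit Arguments. Unset Strict Implicit. Unset Printing Implicit Defensive.
Import Order.TTheory GRing.Theory Num.Theory.
Local Open Scope ring_scope.

Definition grid (n E : nat) := {ffun 'I_E -> 'I_n}.
Definition word (F : fieldType) (n E : nat) := {ffun grid n E -> F}.

Definition upd n E (y : grid n E) (i : 'I_E) (k : 'I_n) : grid n E :=
  [ffun j => if j == i then k else y j].

Definition restr (F : fieldType) n E (c : word F n E) (i : 'I_E) (y : grid n E)
  : 'rV[F]_n := \row_(k < n) c (upd y i k).

Definition lines n E (i : 'I_E) : {set {set grid n E}} :=
  [set [set z : grid n E | [forall j, (j != i) ==> (z j == y j)]] | y : grid n E].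

Definition line_wt (F : fieldType) n E (x : word F n E) (i : 'I_E) : nat :=
  #|[set l in @lines n E i | [exists z in l, x z != 0]]|.

Definition line_nwt (R : realType) (F : fieldType) n E (x : word F n E) (i : 'I_E) : R :=
  (line_wt x i)%:R / (n ^ (E.-1))%:R.

Definition nwt (R : realType) (F : fieldType) n E (x : word F n E) : R :=
  #|[set z | x z != 0]|%:R / #|{: grid n E}|%:R.

Definition in_Ai (F : fieldType) n E (A : 'I_E -> {vspace 'rV[F]_n}) (i : 'I_E)
  (c : word F n E) : Prop :=
  forall y : grid n E, restr c i y \in A i.

Definition in_boxsum (F : fieldType) n E (A : 'I_E -> {vspace 'rV[F]_n})
  (c : word F n E) : Prop :=
  exists a : 'I_E -> word F n E, (forall i, in_Ai A i (a i)) /\ c = \sum_i a i.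

Definition product_expanding (R : realType) (F : fieldType) n E
  (A : 'I_E -> {vspace 'rV[F]_n}) (r : R) : Prop :=
  forall c : word F n E, in_boxsum A c ->
    exists a : 'I_E -> word F n E,
      (forall i, in_Ai A i (a i)) /\ c = \sum_i a i /\
      r * \sum_i line_nwt R (a i) i <= nwt R c.

(* rho(A_1,...,A_E): the maximal such rho, taken as a supremum in the
   extended reals (it is +oo exactly when the product code is {0}). *)
Definition rho (R : realType) (F : fieldType) n E
  (A : 'I_E -> {vspace 'rV[F]_n}) : \bar R :=
  ereal_sup [set r%:E | r in [set r : R | product_expanding A r]].

Definition cons0 (F : fieldType) n D (C : 'I_D -> {vspace 'rV[F]_n})
  : 'I_D.+1 -> {vspace 'rV[F]_n} :=
  fun i => if unlift ord0 i is Some j then C j else 0%VS.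

(* Main.v *)
Require Import Defs.
From HB Require Import structures.
From mathcomp Require Import all_boot all_order all_algebra all_field.
From mathcomp Require Import all_classical all_reals all_analysis.
From mathcomp Require Import ring.
Set Implicit Arguments. Unset Strict Implicit. Unset Printing Implicit Defensive.
Import Order.TTheory GRing.Theory Num.Theory.
Local Open Scope ring_scope.

Section Grid.
Variables (n D : nat).

Definition ext (x0 : 'I_n) (y : grid n D) : grid n D.+1 :=
  [ffun i => if unlift ord0 i is Some j then y j else x0].
Definition tl (y : grid n D.+1) : grid n D := [ffun j => y (lift ord0 j)].

Lemma ext_tl (y : grid n D.+1) : ext (y ord0) (tl y) = y.
Proof. apply/ffunP => i; rewrite ffunE; case: unliftP => [j ->|->]; by rewrite ?ffunE. Qed.
Lemma tl_ext x0 (y : grid n D) : tl (ext x0 y) = y.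
Proof. by apply/ffunP => j; rewrite !ffunE liftK. Qed.
Lemma ext0 x0 (y : grid n D) : ext x0 y ord0 = x0.
Proof. by rewrite ffunE unlift_none. Qed.
Lemma ext_lift x0 (y : grid n D) j : ext x0 y (lift ord0 j) = y j.
Proof. by rewrite ffunE liftK. Qed.
Lemma upd_ext x0 (y : grid n D) j k : upd (ext x0 y) (lift ord0 j) k = ext x0 (upd y j k).
Proof.
apply/ffunP => i; rewrite !ffunE; case: unliftP => [j' ->|->].
  by rewrite (inj_eq (@lift_inj _ ord0)) ffunE.
by rewrite (negbTE (neq_lift _ _)).
Qed.

Lemma ext_inj x1 x2 (y1 y2 : grid n D) : ext x1 y1 = ext x2 y2 -> x1 = x2 /\ y1 = y2.
Proof. by move=> h; split; [rewrite -(ext0 x1 y1) h ext0 | rewrite -(tl_ext x1 y1) h tl_ext]. Qed.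

Lemma card_split (P : pred (grid n D.+1)) :
  #|[set y | P y]| = (\sum_(x0 : 'I_n) #|[set y | P (ext x0 y)]|)%N.
Proof.
rewrite -sum1_card.
rewrite (reindex (fun p : 'I_n * grid n D => ext p.1 p.2)); last first.
  exists (fun y : grid n D.+1 => (y ord0, tl y)) => [[x y]|y] _ /=; first by rewrite ext0 tl_ext.
  by rewrite ext_tl.
rewrite (eq_bigl (fun p : 'I_n * grid n D => xpredT p.1 && (fun x0 y => P (ext x0 y)) p.1 p.2)); last by move=> p; rewrite inE.
rewrite -(pair_big_dep xpredT (fun x0 y => P (ext x0 y)) (fun _ _ => 1%N)) /=.
apply: eq_bigr => x0 _; rewrite -sum1_card; apply: eq_bigl => y; by rewrite !inE.
Qed.
End Grid.

Definition Lset n E (i : 'I_E) (y : grid n E) : {set grid n E} :=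
  [set z : grid n E | [forall j, (j != i) ==> (z j == y j)]].

Lemma in_Lset n E i (y z : grid n E) : (z \in Lset i y) = [forall j, (j != i) ==> (z j == y j)].
Proof. by rewrite inE. Qed.

Lemma upd_id n E (y : grid n E) i : upd y i (y i) = y.
Proof. by apply/ffunP => j; rewrite ffunE; case: eqP => // ->. Qed.
Lemma upd_upd n E (y : grid n E) i k k' : upd (upd y i k) i k' = upd y i k'.
Proof. by apply/ffunP => j; rewrite !ffunE; case: eqP. Qed.
Lemma upd_at n E (y : grid n E) i k : upd y i k i = k.
Proof. by rewrite ffunE eqxx. Qed.

Lemma line_wt_n0 (F : fieldType) E (x : word F 0 E) i : line_wt x i = 0%N.
Proof.
apply/eqP; rewrite cards_eq0; apply/eqP/setP => l; rewrite !inE.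
apply/negbTE; apply/negP => /andP [/imsetP [y _ _] _].
by case: (y i).
Qed.

Lemma line_wt_B (F : fieldType) N E (x : word F N.+1 E) i :
  line_wt x i = #|[set y : grid N.+1 E | (y i == ord0) && [exists k, x (upd y i k) != 0]]|.
Proof.
rewrite /line_wt.
have -> : [set l in @lines N.+1 E i | [exists z in l, x z != 0]] =
  Lset i @: [set y : grid N.+1 E | (y i == ord0) && [exists k, x (upd y i k) != 0]].
  apply/setP => l; rewrite !inE; apply/andP/imsetP.
  - case=> /imsetP [y _ ->] /existsP [z /andP [zl xz]].
    exists (upd y i ord0).
      rewrite inE upd_at eqxx /=; apply/existsP; exists (z i).
      rewrite upd_upd; suff -> : upd y i (z i) = z by [].
      apply/ffunP => j; rewrite ffunE; case: eqP => [->//|/eqP ji].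
      by move: zl; rewrite in_Lset => /forallP /(_ j); rewrite ji => /eqP.
    apply/setP => z'; rewrite !in_Lset; apply/eq_forallb => j.
    by rewrite ffunE; case: eqP.
  - case=> y; rewrite inE => /andP [_ /existsP [k xk]] ->; split.
      by apply/imsetP; exists y.
    apply/existsP; exists (upd y i k); rewrite xk andbT in_Lset.
    by apply/forallP => j; apply/implyP => ji; rewrite ffunE (negbTE ji).
rewrite card_in_imset // => y1 y2; rewrite !inE => /andP [/eqP h1 _] /andP [/eqP h2 _] e.
apply/ffunP => j; case: (eqVneq j i) => [->|ji]; first by rewrite h1 h2.
have : y1 \in Lset i y2 by rewrite -e in_Lset; apply/forallP => j'; apply/implyP.
by rewrite in_Lset => /forallP /(_ j); rewrite ji => /eqP.
Qed.

Section Slices.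
Variables (F : fieldType) (n D : nat).

Definition sl (x0 : 'I_n) (w : word F n D.+1) : word F n D := [ffun y => w (ext x0 y)].
Definition glue (f : 'I_n -> word F n D) : word F n D.+1 := [ffun z : grid n D.+1 => f (z ord0) (tl z)].

Lemma sl_glue f x0 : sl x0 (glue f) = f x0.
Proof. by apply/ffunP => y; rewrite !ffunE unlift_none tl_ext. Qed.
Lemma glue_sl w : glue (fun x0 => sl x0 w) = w.
Proof. by apply/ffunP => z; rewrite !ffunE ext_tl. Qed.
Lemma sl_sum x0 I (r : seq I) (P : pred I) (G : I -> word F n D.+1) :
  sl x0 (\sum_(i <- r | P i) G i) = \sum_(i <- r | P i) sl x0 (G i).
Proof. by apply/ffunP => y; rewrite ffunE !sum_ffunE; apply: eq_bigr => i _; rewrite ffunE. Qed.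
Lemma sl0 x0 : sl x0 0 = 0.
Proof. by apply/ffunP => y; rewrite !ffunE. Qed.

Lemma restr_sl (w : word F n D.+1) j x0 y :
  restr w (lift ord0 j) (ext x0 y) = restr (sl x0 w) j y.
Proof. by apply/rowP => k; rewrite !mxE upd_ext ffunE. Qed.

Variable C : 'I_D -> {vspace 'rV[F]_n}.

Lemma cons0_0 : cons0 C ord0 = 0%VS.
Proof. by rewrite /cons0 unlift_none. Qed.
Lemma cons0_lift j : cons0 C (lift ord0 j) = C j.
Proof. by rewrite /cons0 liftK. Qed.

Lemma in_Ai_0 (w : word F n D.+1) : in_Ai (cons0 C) ord0 w -> w = 0.
Proof.
move=> h; apply/ffunP => z; rewrite ffunE.
have := h z; rewrite cons0_0 memv0 => /eqP /(congr1 (fun M : 'rV[F]_n => M ord0 (z ord0))).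
by rewrite /restr !mxE upd_id.
Qed.

Lemma in_Ai_lift (w : word F n D.+1) j :
  in_Ai (cons0 C) (lift ord0 j) w <-> forall x0, in_Ai C j (sl x0 w).
Proof.
split.
  by move=> h x0 y; rewrite -restr_sl -(cons0_lift j); apply: h.
by move=> h z; rewrite cons0_lift -(ext_tl z) restr_sl; apply: h.
Qed.
End Slices.

Lemma in_Ai_zero (F : fieldType) n E (A : 'I_E -> {vspace 'rV[F]_n}) i : in_Ai A i 0.
Proof.
move=> y; have -> : restr (0 : word F n E) i y = 0 by apply/rowP => k; rewrite !mxE ffunE.
exact: mem0v.
Qed.

Lemma card_grid n E : #|{: grid n E}| = (n ^ E)%N.
Proof. by rewrite card_ffun !card_ord. Qed.

Section Weights.
Variables (R : realType) (F : fieldType) (N D : nat).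

Lemma line_wt_sl (w : word F N.+1 D.+1) j :
  line_wt w (lift ord0 j) = (\sum_x0 line_wt (sl x0 w) j)%N.
Proof.
rewrite line_wt_B card_split; apply: eq_bigr => x0 _; rewrite line_wt_B.
apply: eq_card => y; rewrite !inE ext_lift; congr (_ && _).
by apply: eq_existsb => k; rewrite upd_ext ffunE.
Qed.

Lemma supp_sl (w : word F N.+1 D.+1) :
  #|[set z | w z != 0]| = (\sum_x0 #|[set y | sl x0 w y != 0%R]|)%N.
Proof.
rewrite card_split; apply: eq_bigr => x0 _; apply: eq_card => y; by rewrite !inE ffunE.
Qed.

Lemma lnwt_sl (w : word F N.+1 D.+1) j :
  line_nwt R w (lift ord0 j) * N.+1%:R = \sum_x0 line_nwt R (sl x0 w) j.
Proof.
have D0 : (0 < D)%N by case: j => [[|k]] //; case: D {w} => [|d] //.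
rewrite /line_nwt -mulr_suml line_wt_sl natr_sum /=.
have -> : (N.+1 ^ D = N.+1 * N.+1 ^ D.-1)%N by rewrite -expnS prednK.
rewrite natrM; set s := (\sum_(i < N.+1) _).
have h1 : (N.+1%:R : R) != 0 by rewrite pnatr_eq0.
have h2 : ((N.+1 ^ D.-1)%:R : R) != 0 by rewrite pnatr_eq0 expn_eq0.
by field; rewrite h2 nat1r h1.
Qed.

Lemma nwt_sl (w : word F N.+1 D.+1) :
  nwt R w * N.+1%:R = \sum_x0 nwt R (sl x0 w).
Proof.
rewrite /nwt -mulr_suml supp_sl natr_sum !card_grid expnS natrM.
set s := (\sum_(i < N.+1) _).
have h1 : (N.+1%:R : R) != 0 by rewrite pnatr_eq0.
have h2 : ((N.+1 ^ D)%:R : R) != 0 by rewrite pnatr_eq0 expn_eq0.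
by field; rewrite h2 nat1r h1.
Qed.
End Weights.

Section Basic.
Variables (R : realType) (F : fieldType) (n E : nat).

Lemma lnwt_ge0 (x : word F n E) i : 0 <= line_nwt R x i.
Proof. by rewrite /line_nwt divr_ge0 ?ler0n. Qed.
Lemma nwt_ge0 (x : word F n E) : 0 <= nwt R x.
Proof. by rewrite /nwt divr_ge0 ?ler0n. Qed.
Lemma lnwt0 i : line_nwt R (0 : word F n E) i = 0.
Proof.
rewrite /line_nwt /line_wt; set S := [set _ in _ | _].
suff -> : S = finset.set0 by rewrite cards0 mul0r.
apply/setP => l; rewrite !inE; apply/negbTE; apply/negP => /andP [_ /existsP [z]].
by rewrite ffunE eqxx andbF.
Qed.
Lemma nwt0 : nwt R (0 : word F n E) = 0.
Proof.
rewrite /nwt; set S := [set _ | _].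
suff -> : S = finset.set0 by rewrite cards0 mul0r.
by apply/setP => z; rewrite !inE ffunE eqxx.
Qed.

Lemma PE_nonpos (A : 'I_E -> {vspace 'rV[F]_n}) (r : R) : r <= 0 -> product_expanding A r.
Proof.
move=> r0 c [a [ha hc]]; exists a; split => //; split => //.
apply: le_trans (nwt_ge0 c); apply: mulr_le0_ge0 => //.
by apply: sumr_ge0 => i _; apply: lnwt_ge0.
Qed.
End Basic.

Lemma PE_n0 (R : realType) (F : fieldType) E (A : 'I_E -> {vspace 'rV[F]_0}) (r : R) :
  product_expanding A r.
Proof.
move=> c [a [ha hc]]; exists a; split => //; split => //.
rewrite big1 ?mulr0 ?nwt_ge0 // => i _.
by rewrite /line_nwt line_wt_n0 mul0r.
Qed.

Section Dirs.
Variables (R : realType) (F : fieldType) (N D : nat) (C : 'I_D -> {vspace 'rV[F]_N.+1}).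

Lemma dirA (r : R) : product_expanding C r -> product_expanding (cons0 C) r.
Proof.
move=> hC c [a [ha hc]].
have a0 := in_Ai_0 (ha ord0).
have hsl : forall x0, in_boxsum C (sl x0 c).
  move=> x0; exists (fun j => sl x0 (a (lift ord0 j))); split.
    by move=> j; exact: (proj1 (in_Ai_lift _ _ _) (ha (lift ord0 j)) x0).
  by rewrite hc big_ord_recl a0 add0r sl_sum.
have hex : forall x0 : 'I_N.+1, exists b : 'I_D -> word F N.+1 D,
    (forall j, in_Ai C j (b j)) /\ sl x0 c = \sum_j b j /\
    r * \sum_j line_nwt R (b j) j <= nwt R (sl x0 c).
  by move=> x0; apply: hC; apply: hsl.
have [b hb] := boolp.choice hex.
exists (fun i : 'I_D.+1 => if unlift ord0 i is Some j then glue (fun x0 => b x0 j) else (0 : word F N.+1 D.+1)).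
split.
  move=> i; case: unliftP => [j ->|->]; last exact: in_Ai_zero.
  by apply/in_Ai_lift => x0; rewrite sl_glue; exact: (hb x0).1 j.
split.
  rewrite big_ord_recl unlift_none add0r.
  under eq_bigr do rewrite liftK.
  apply/ffunP => z; rewrite sum_ffunE -{1}(ext_tl z).
  have -> : c (ext (z ord0) (tl z)) = sl (z ord0) c (tl z) by rewrite ffunE.
  rewrite (hb _).2.1 sum_ffunE.
  by apply: eq_bigr => j _; rewrite ffunE.
rewrite big_ord_recl unlift_none lnwt0 add0r.
under eq_bigr do rewrite liftK.
have N0 : (0 : R) < N.+1%:R by rewrite ltr0n.
rewrite -(ler_pM2r N0) -mulrA mulr_suml nwt_sl.
under eq_bigr do rewrite lnwt_sl.
rewrite exchange_big mulr_sumr; apply: ler_sum => x0 _.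
under eq_bigr do rewrite sl_glue.
exact: (hb x0).2.2.
Qed.

Lemma dirB (r : R) : 0 < r -> product_expanding (cons0 C) r -> product_expanding C r.
Proof.
move=> r0 hC c [a [ha hc]].
pose ct := glue (fun x0 => if x0 == ord0 then c else 0).
have hct : in_boxsum (cons0 C) ct.
  exists (fun i => if unlift ord0 i is Some j then
            glue (fun x0 => if x0 == ord0 then a j else 0) else 0); split.
    move=> i; case: unliftP => [j ->|->]; last exact: in_Ai_zero.
    apply/in_Ai_lift => x0; rewrite sl_glue; case: eqP => _; [exact: ha | exact: in_Ai_zero].
  rewrite big_ord_recl unlift_none add0r.
  under eq_bigr do rewrite liftK.
  apply/ffunP => z; rewrite sum_ffunE !ffunE.
  under eq_bigr do rewrite ffunE.
  case: eqP => _.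
    by rewrite hc sum_ffunE.
  by rewrite big1 ?ffunE // => j _; rewrite !ffunE.
have [e [he [hce hr]]] := hC ct hct.
have e0 := in_Ai_0 (he ord0).
exists (fun j => sl ord0 (e (lift ord0 j))); split.
  by move=> j; exact: (proj1 (in_Ai_lift _ _ _) (he (lift ord0 j)) ord0).
split.
  have -> : c = sl ord0 ct by rewrite /ct sl_glue eqxx.
  by rewrite hce sl_sum big_ord_recl e0 sl0 add0r.
have N0 : (0 : R) < N.+1%:R by rewrite ltr0n.
have hnwt : nwt R ct * N.+1%:R = nwt R c.
  rewrite nwt_sl (bigD1 ord0) //= /ct sl_glue eqxx big1 ?addr0 // => x0 /negbTE x0n.
  by rewrite sl_glue x0n nwt0.
have key : \sum_j line_nwt R (sl ord0 (e (lift ord0 j))) j <=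
           (\sum_i line_nwt R (e i) i) * N.+1%:R.
  rewrite big_ord_recl e0 lnwt0 add0r mulr_suml; apply: ler_sum => j _.
  rewrite lnwt_sl (bigD1 ord0) //= lerDl.
  by apply: sumr_ge0 => x0 _; apply: lnwt_ge0.
rewrite -hnwt; apply: le_trans (ler_wpM2r (ltW N0) hr).
by rewrite -mulrA ler_wpM2l // ltW.
Qed.
End Dirs.

Theorem lemma3 (R : realType) (F : finFieldType) (HF : (2%N \in [pchar F])%R)
  (n D : nat) (C : 'I_D -> {vspace 'rV[F]_n}) :
  rho R (cons0 C) = rho R C.
Proof.
rewrite /rho.
suff -> : [set r : R | product_expanding (cons0 C) r]%classic = [set r : R | product_expanding C r]%classic by [].
apply/seteqP; split => r /=; case: n C => [|N] C.
- by move=> _; apply: PE_n0.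
- move=> h; case: (lerP r 0) => [r0|r0]; first exact: PE_nonpos.
  exact: dirB h.
- by move=> _; apply: PE_n0.
- exact: dirA.
Qed.
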